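(* Assume each bus has either no generator or at least two generators, and $x^*_n>0$ for all $n$; let $b^*$ be the unique efficient Nash equilibrium, $b^*_n=2a_nx^*_n+c_n$. Consider an execution of the Bid Adjustment Algorithm with $0<\beta_k<2a_n$ for all $n$ and $k\ge1$. Let $0<r<\|b(1)-b^*\|$ and assume that for all $k\ge1$, $$\alpha\le\beta_k\le B(r):=\frac{1}{2a_{\max}}\Bigl(\frac{1}{2a_{\min}^2}+\frac{16\bar y^2}{r^2}\Bigr)^{-1}$$ for some $\alpha>0$, where $a_{\max}=\max_na_n$, $a_{\min}=\min_na_n$, $\bar y=\sum_iy_i$. Then: (i) there exists $l\ge1$ such that $\|b(l)-b^*\|<r$ and, for all $k\in\{1,\dots,l-1\}$, $\|b(k)-b^*\|\ge r$ and $$\|b(k+1)-b^*\|\le\Bigl(1-\frac{\alpha}{2a_{\max}}\Bigr)^{k/2}\|b(1)-b^*\|;$$ (ii) for all $k\ge l$, $\|b(k)-b^*\|\le\bigl(1+\frac{B(r)}{2a_{\max}}\bigr)^{1/2}r$.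
   Context: Network: directed graph with buses $\{1,\dots,N_b\}$, edge set $\mathcal E$, line flow limits $\bar z_{ij}>0$, $G_i$ the set of generators at bus $i$ (the $G_i$ partition $\{1,\dots,N\}$), loads $y_i\ge0$. Generator $n$ has cost $f_n(x)=a_nx^2+c_nx$, $a_n>0$, $c_n\ge0$. DC-OPF: minimize $\sum_n f_n(x_n)$ over $(x,z)$ s.t. $\sum_{j:(i,j)\in\mathcal E}z_{ij}-\sum_{j:(j,i)\in\mathcal E}z_{ji}=\sum_{n\in G_i}x_n-y_i$ for all $i$, $|z_{ij}|\le\bar z_{ij}$, $x\ge0$; assumed feasible with optimizer $(x^*,z^* )$, $x^*$ unique. S-DC-OPF given bids $b\ge0$: same constraints, objective $\sum_n b_nx_n$. An efficient Nash equilibrium is in particular a bid $b^*$ for which $(x^*,z^* )$ optimizes S-DC-OPF with bids $b^*$ and $x^*_n=\arg\max_{x\ge0}(b^*_nx-f_n(x))$. $\|\cdot\|$ is the Euclidean norm. Bid Adjustment Algorithm: given stepsizes $\beta_k>0$, each generator picks $b_n(1)\ge c_n$. For each $k\ge1$: $q_n(k)=\arg\max_{q\ge0}(b_n(k)q-f_n(q))$; the operator selects an optimizer $(x^{\rm opt}(k),z^{\rm opt}(k))$ of S-DC-OPF with bids $b(k)$; and $b_n(k+1)=[\,b_n(k)+\beta_k(x^{\rm opt}_n(k)-q_n(k))\,]^+$, where $[u]^+=\max\{0,u\}$. *)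

(* Defs.v *)
From Stdlib Require Export Reals Lra List.
Export ListNotations.
Open Scope R_scope.

Definition rsum (n : nat) (f : nat -> R) : R :=
  fold_right Rplus 0 (map f (seq 0 n)).

(* Network data: buses 0..nb-1, generators 0..ng-1, directed edges,
   line limits, generator-to-bus map (bus_of n = i  iff  n in G_i), loads. *)
Record network := {
  nb : nat;
  ng : nat;
  edges : list (nat * nat);
  zbar : nat -> nat -> R;
  bus_of : nat -> nat;
  load : nat -> R
}.

Definition outflow (E : list (nat * nat)) (z : nat -> nat -> R) (i : nat) : R :=
  fold_right Rplus 0
    (map (fun e => if Nat.eqb (fst e) i then z (fst e) (snd e) else 0) E).

Definition inflow (E : list (nat * nat)) (z : nat -> nat -> R) (i : nat) : R :=
  fold_right Rplus 0
    (map (fun e => if Nat.eqb (snd e) i then z (fst e) (snd e) else 0) E).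

Definition injection (net : network) (x : nat -> R) (i : nat) : R :=
  rsum (ng net) (fun n => if Nat.eqb (bus_of net n) i then x n else 0).

Definition ngen_at (net : network) (i : nat) : nat :=
  length (filter (fun n => Nat.eqb (bus_of net n) i) (seq 0 (ng net))).

Definition feasible (net : network) (x : nat -> R) (z : nat -> nat -> R) : Prop :=
  (forall i, (i < nb net)%nat ->
     outflow (edges net) z i - inflow (edges net) z i
     = injection net x i - load net i) /\
  (forall i j, In (i, j) (edges net) -> Rabs (z i j) <= zbar net i j) /\
  (forall n, (n < ng net)%nat -> 0 <= x n).

Definition gcost (an cn xn : R) : R := an * xn ^ 2 + cn * xn.

Definition total_cost (net : network) (a c x : nat -> R) : R :=
  rsum (ng net) (fun n => gcost (a n) (c n) (x n)).

Definition dcopf_opt (net : network) (a c : nat -> R)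
    (x : nat -> R) (z : nat -> nat -> R) : Prop :=
  feasible net x z /\
  forall x' z', feasible net x' z' -> total_cost net a c x <= total_cost net a c x'.

Definition sdcopf_opt (net : network) (b : nat -> R)
    (x : nat -> R) (z : nat -> nat -> R) : Prop :=
  feasible net x z /\
  forall x' z', feasible net x' z' ->
    rsum (ng net) (fun n => b n * x n) <= rsum (ng net) (fun n => b n * x' n).

Definition is_best_response (an cn bn q : R) : Prop :=
  0 <= q /\ forall q', 0 <= q' -> bn * q' - gcost an cn q' <= bn * q - gcost an cn q.

(* An execution of the Bid Adjustment Algorithm: bids b k n (k >= 1),
   best responses q k n, operator's S-DC-OPF optimizers (xo k, zo k). *)
Definition BAA_execution (net : network) (a c : nat -> R) (beta : nat -> R)
    (b q : nat -> nat -> R) (xo : nat -> nat -> R) (zo : nat -> nat -> nat -> R) : Prop :=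
  (forall n, (n < ng net)%nat -> c n <= b 1%nat n) /\
  forall k, (1 <= k)%nat ->
    (forall n, (n < ng net)%nat -> is_best_response (a n) (c n) (b k n) (q k n)) /\
    sdcopf_opt net (b k) (xo k) (zo k) /\
    (forall n, (n < ng net)%nat ->
       b (S k) n = Rmax 0 (b k n + beta k * (xo k n - q k n))).

Definition bdist (N : nat) (u v : nat -> R) : R :=
  sqrt (rsum N (fun n => (u n - v n) ^ 2)).

Definition amax (net : network) (a : nat -> R) : R :=
  fold_right Rmax (a 0%nat) (map a (seq 0 (ng net))).
Definition amin (net : network) (a : nat -> R) : R :=
  fold_right Rmin (a 0%nat) (map a (seq 0 (ng net))).
Definition ybar (net : network) : R := rsum (nb net) (load net).

Definition Bstep (net : network) (a : nat -> R) (r : R) : R :=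
  / (2 * amax net a) *
  / (/ (2 * amin net a ^ 2) + 16 * ybar net ^ 2 / r ^ 2).

(* Main.v *)
Require Import Defs.
From Stdlib Require Import Reals List Lra Lia Classical.
Open Scope R_scope.

Lemma fr_plus_init (l : list R) (x : R) : fold_right Rplus x l = fold_right Rplus 0 l + x.
Proof. induction l; simpl; [ring | rewrite IHl; ring]. Qed.

Lemma rsum_0 f : rsum 0 f = 0.
Proof. reflexivity. Qed.

Lemma rsum_S n f : rsum (S n) f = rsum n f + f n.
Proof. unfold rsum. rewrite seq_S, map_app, fold_right_app. simpl.
  rewrite fr_plus_init. ring. Qed.

Lemma rsum_ext n f g : (forall i, (i < n)%nat -> f i = g i) -> rsum n f = rsum n g.
Proof. induction n; intros H; [reflexivity|]. rewrite !rsum_S, IHn by (intros; apply H; lia).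
  rewrite H by lia. reflexivity. Qed.

Lemma rsum_le n f g : (forall i, (i < n)%nat -> f i <= g i) -> rsum n f <= rsum n g.
Proof. induction n; intros H; [rewrite !rsum_0; lra|]. rewrite !rsum_S.
  assert (f n <= g n) by (apply H; lia). assert (rsum n f <= rsum n g) by (apply IHn; intros; apply H; lia). lra. Qed.

Lemma rsum_plus n f g : rsum n (fun i => f i + g i) = rsum n f + rsum n g.
Proof. induction n; [rewrite !rsum_0; ring|]. rewrite !rsum_S, IHn. ring. Qed.

Lemma rsum_scal n k f : rsum n (fun i => k * f i) = k * rsum n f.
Proof. induction n; [rewrite !rsum_0; ring|]. rewrite !rsum_S, IHn. ring. Qed.

Lemma rsum_minus n f g : rsum n (fun i => f i - g i) = rsum n f - rsum n g.
Proof. induction n; [rewrite !rsum_0; ring|]. rewrite !rsum_S, IHn. ring. Qed.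

Lemma rsum_nonneg n f : (forall i, (i < n)%nat -> 0 <= f i) -> 0 <= rsum n f.
Proof. intros H. replace 0 with (rsum n (fun _ => 0)). apply rsum_le; auto.
  induction n; [reflexivity| rewrite rsum_S, IHn; [ring| intros; apply H; lia]]. Qed.

Lemma rsum_sq_le n f : (forall i, (i < n)%nat -> 0 <= f i) -> rsum n (fun i => f i ^ 2) <= (rsum n f) ^ 2.
Proof. induction n; intros H; [rewrite !rsum_0; simpl; lra|]. rewrite !rsum_S.
  assert (0 <= f n) by (apply H; lia).
  assert (0 <= rsum n f) by (apply rsum_nonneg; intros; apply H; lia).
  assert (rsum n (fun i => f i ^ 2) <= rsum n f ^ 2) by (apply IHn; intros; apply H; lia).
  nra. Qed.

Lemma rsum_delta n k v : (k < n)%nat -> rsum n (fun i => if Nat.eqb k i then v else 0) = v.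
Proof. induction n; intros H; [lia|]. rewrite rsum_S.
  destruct (Nat.eqb_spec k n).
  - subst. rewrite (rsum_ext _ _ (fun _ => 0)). 2:{ intros i Hi. destruct (Nat.eqb_spec n i); [lia|reflexivity]. }
    assert (rsum n (fun _ => 0) = 0). { clear. induction n; [reflexivity| rewrite rsum_S, IHn; ring]. } lra.
  - rewrite IHn by lia. ring. Qed.

Definition lsum {A} (l : list A) (f : A -> R) := fold_right Rplus 0 (map f l).

Lemma rsum_lsum {A} n (l : list A) (g : nat -> A -> R) :
  rsum n (fun i => lsum l (g i)) = lsum l (fun e => rsum n (fun i => g i e)).
Proof. induction l; simpl.
  - clear. induction n; [reflexivity| rewrite rsum_S, IHn; unfold lsum; simpl; ring].
  - unfold lsum in *; simpl. rewrite rsum_plus. f_equal. exact IHl. Qed.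

Lemma lsum_ext {A} (l : list A) f g : (forall e, In e l -> f e = g e) -> lsum l f = lsum l g.
Proof. induction l; intros H; [reflexivity|]. unfold lsum in *; simpl. rewrite H by (left; auto).
  f_equal. apply IHl. intros; apply H; right; auto. Qed.

Lemma rsum_swap n m (f : nat -> nat -> R) :
  rsum n (fun i => rsum m (fun j => f i j)) = rsum m (fun j => rsum n (fun i => f i j)).
Proof. induction n.
  - rewrite rsum_0. clear. induction m; [reflexivity| rewrite rsum_S, <- IHm, rsum_0; ring].
  - rewrite rsum_S, IHn, <- rsum_plus. apply rsum_ext. intros; rewrite rsum_S; reflexivity. Qed.

Lemma sum_gen (net : network) x z
  (Hedges : forall i j, In (i, j) (edges net) -> (i < nb net)%nat /\ (j < nb net)%nat)
  (Hbus : forall n, (n < ng net)%nat -> (bus_of net n < nb net)%nat) :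
  feasible net x z -> rsum (ng net) x = ybar net.
Proof.
  intros [Hf _].
  assert (E: rsum (nb net) (fun i => outflow (edges net) z i - inflow (edges net) z i)
          = rsum (nb net) (fun i => injection net x i - load net i)) by (apply rsum_ext; auto).
  rewrite !rsum_minus in E.
  unfold outflow, inflow, injection in E. fold (lsum (edges net) (fun e => if Nat.eqb (fst e) 0 then z (fst e) (snd e) else 0)) in E.
  change (rsum (nb net) (fun i => lsum (edges net) (fun e => if Nat.eqb (fst e) i then z (fst e) (snd e) else 0))
   - rsum (nb net) (fun i => lsum (edges net) (fun e => if Nat.eqb (snd e) i then z (fst e) (snd e) else 0))
   = rsum (nb net) (fun i => rsum (ng net) (fun n => if Nat.eqb (bus_of net n) i then x n else 0)) - rsum (nb net) (load net)) in E.
  rewrite !rsum_lsum, rsum_swap in E.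
  rewrite (lsum_ext _ _ (fun e => z (fst e) (snd e))) in E.
  2:{ intros [i j] Hin. apply rsum_delta. apply (Hedges i j Hin). }
  rewrite (lsum_ext _ (fun e => rsum _ _) (fun e => z (fst e) (snd e))) in E.
  2:{ intros [i j] Hin. apply rsum_delta. apply (Hedges i j Hin). }
  rewrite (rsum_ext (ng net) _ x) in E. 2:{ intros; apply rsum_delta; auto. }
  unfold ybar. lra.
Qed.

Lemma rsum_conv n f g h t : (forall k, (k < n)%nat -> h k = f k + t * (g k - f k)) ->
  rsum n h = rsum n f + t * (rsum n g - rsum n f).
Proof. intros H. rewrite (rsum_ext _ _ _ H). induction n; [rewrite !rsum_0; ring|].
  rewrite !rsum_S, IHn by (intros; apply H; lia). ring. Qed.

Lemma flow_conv (E : list (nat*nat)) z1 z2 t i :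
  outflow E (fun p q => z1 p q + t * (z2 p q - z1 p q)) i = outflow E z1 i + t * (outflow E z2 i - outflow E z1 i)
  /\ inflow E (fun p q => z1 p q + t * (z2 p q - z1 p q)) i = inflow E z1 i + t * (inflow E z2 i - inflow E z1 i).
Proof. induction E as [|[p q] E IH]; unfold outflow, inflow in *; simpl; [split; ring|].
  destruct IH as [IH1 IH2]. rewrite IH1, IH2.
  destruct (Nat.eqb p i), (Nat.eqb q i); simpl; split; ring. Qed.

Lemma feas_conv net x1 z1 x2 z2 t : 0 <= t <= 1 -> feasible net x1 z1 -> feasible net x2 z2 ->
  feasible net (fun n => x1 n + t * (x2 n - x1 n)) (fun p q => z1 p q + t * (z2 p q - z1 p q)).
Proof.
  intros Ht [F1 [G1 H1]] [F2 [G2 H2]]. split; [|split].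
  - intros i Hi. destruct (flow_conv (edges net) z1 z2 t i) as [-> ->].
    unfold injection. rewrite (rsum_conv _ (fun n => if Nat.eqb (bus_of net n) i then x1 n else 0)
       (fun n => if Nat.eqb (bus_of net n) i then x2 n else 0) _ t).
    2:{ intros; destruct (Nat.eqb _ _); ring. }
    specialize (F1 i Hi); specialize (F2 i Hi). unfold injection in F1, F2. nra.
  - intros i j Hin. specialize (G1 i j Hin). specialize (G2 i j Hin).
    replace (z1 i j + t * (z2 i j - z1 i j)) with ((1 - t) * z1 i j + t * z2 i j) by ring.
    eapply Rle_trans. apply Rabs_triang. rewrite !Rabs_mult, (Rabs_pos_eq t), (Rabs_pos_eq (1-t)) by lra.
    nra.
  - intros n Hn. specialize (H1 n Hn); specialize (H2 n Hn). nra.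
Qed.

Lemma first_order net a c xs zs x z : (forall n, (n < ng net)%nat -> 0 < a n) -> dcopf_opt net a c xs zs -> feasible net x z ->
  rsum (ng net) (fun n => (2 * a n * xs n + c n) * xs n) <=
  rsum (ng net) (fun n => (2 * a n * xs n + c n) * x n).
Proof.
  intros Ha [Fs Hs] F.
  set (d := rsum (ng net) (fun n => (2 * a n * xs n + c n) * (x n - xs n))).
  set (Q := rsum (ng net) (fun n => a n * (x n - xs n) ^ 2)).
  assert (Hd : d = rsum (ng net) (fun n => (2 * a n * xs n + c n) * x n) - rsum (ng net) (fun n => (2 * a n * xs n + c n) * xs n)).
  { unfold d. rewrite <- rsum_minus. apply rsum_ext; intros; ring. }
  enough (0 <= d) by lra.
  assert (Key : forall t, 0 <= t <= 1 -> 0 <= t * d + t ^ 2 * Q).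
  { intros t Ht. specialize (Hs _ _ (feas_conv net xs zs x z t Ht Fs F)).
    unfold total_cost in Hs. unfold d, Q. rewrite <- !rsum_scal.
    rewrite <- rsum_plus. 
    assert (E: rsum (ng net) (fun n => gcost (a n) (c n) (xs n + t * (x n - xs n))) =
      rsum (ng net) (fun n => gcost (a n) (c n) (xs n)) + rsum (ng net) (fun i => t * ((2 * a i * xs i + c i) * (x i - xs i)) + t ^ 2 * (a i * (x i - xs i) ^ 2))).
    { rewrite <- rsum_plus. apply rsum_ext; intros; unfold gcost; ring. }
    lra. }
  destruct (Rle_lt_dec 0 d) as [|Hneg]; [assumption|].
  assert (HQ : 0 <= Q).
  { unfold Q. apply rsum_nonneg. intros i Hi. specialize (Ha i Hi). apply Rmult_le_pos; [lra| apply pow2_ge_0]. }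
  exfalso. set (t := - d / (Q - d)).
  assert (Hpos : 0 < Q - d) by lra.
  assert (Ht : 0 <= t <= 1).
  { unfold t. split. apply Rmult_le_pos; [lra| left; apply Rinv_0_lt_compat; lra].
    apply (Rmult_le_reg_r (Q - d)); [lra|]. unfold Rdiv. rewrite Rmult_assoc, Rinv_l by lra. lra. }
  specialize (Key t Ht).
  assert (t * (Q - d) = - d) by (unfold t; field; lra).
  assert (0 < t) by (unfold t; apply Rmult_lt_0_compat; [lra| apply Rinv_0_lt_compat; lra]).
  assert (E2 : t * d + t ^ 2 * Q = t ^ 2 * d).
  { replace (t ^ 2 * Q) with (t * (t * (Q - d)) + t ^ 2 * d) by ring. rewrite H. ring. }
  rewrite E2 in Key. assert (0 < t ^ 2) by (apply pow_lt; auto). nra.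
Qed.

Lemma fold_max_ge (l : list R) x0 : (forall y, In y l -> y <= fold_right Rmax x0 l) /\ x0 <= fold_right Rmax x0 l.
Proof. induction l; simpl; [split; [tauto| lra]|]. destruct IHl as [H1 H2].
  split. intros y [<-|Hy]. apply Rmax_l. eapply Rle_trans; [apply H1; auto| apply Rmax_r].
  eapply Rle_trans; [apply H2| apply Rmax_r]. Qed.

Lemma fold_min_le (l : list R) x0 : (forall y, In y l -> fold_right Rmin x0 l <= y) /\ fold_right Rmin x0 l <= x0.
Proof. induction l; simpl; [split; [tauto| lra]|]. destruct IHl as [H1 H2].
  split. intros y [<-|Hy]. apply Rmin_l. eapply Rle_trans; [apply Rmin_r| apply H1; auto].
  eapply Rle_trans; [apply Rmin_r| apply H2]. Qed.

Lemma fold_min_pos (l : list R) x0 : 0 < x0 -> (forall y, In y l -> 0 < y) -> 0 < fold_right Rmin x0 l.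
Proof. induction l; simpl; intros; auto. apply Rmin_glb_lt; auto. Qed.

Lemma amax_ge net a n : (n < ng net)%nat -> a n <= amax net a.
Proof. intros Hn. unfold amax. apply (proj1 (fold_max_ge _ _)). apply in_map. apply in_seq. lia. Qed.

Lemma amin_le net a n : (n < ng net)%nat -> amin net a <= a n.
Proof. intros Hn. unfold amin. apply (proj1 (fold_min_le _ _)). apply in_map. apply in_seq. lia. Qed.

Lemma amin_pos net a : (0 < ng net)%nat -> (forall n, (n < ng net)%nat -> 0 < a n) -> 0 < amin net a.
Proof. intros H0 Ha. unfold amin. apply fold_min_pos. apply Ha; auto.
  intros y Hy. apply in_map_iff in Hy. destruct Hy as [n [<- Hn]]. apply in_seq in Hn. apply Ha. lia. Qed.

Lemma best_resp an cn bn q : 0 < an -> cn <= bn -> is_best_response an cn bn q -> 2 * an * q = bn - cn.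
Proof. intros Ha Hc [Hq H]. set (m := (bn - cn) / (2 * an)).
  assert (Hm : 2 * an * m = bn - cn) by (unfold m; field; lra).
  assert (0 <= m). { unfold m. apply Rmult_le_pos; [lra| left; apply Rinv_0_lt_compat; lra]. }
  specialize (H m H0). unfold gcost in H.
  assert (an * (m - q) ^ 2 <= 0).
  { replace (bn) with (2 * an * m + cn) in H by lra. nra. }
  assert ((m - q) ^ 2 = 0). { assert (0 <= (m-q)^2) by apply pow2_ge_0. nra. }
  assert (m = q) by nra. subst. lra. Qed.

Lemma comp_ineq (u e g a A m be : R) : 0 < m -> m <= a -> a <= A -> u = 2 * a * g -> 0 < be ->
  (u + be * (e - g)) ^ 2 <= u ^ 2 * (1 - 2 * (be / (2 * A)) + be ^ 2 / (2 * m ^ 2)) + 2 * be * (u * e) + 2 * be ^ 2 * e ^ 2.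
Proof. intros Hm Hma HaA Hu Hb. subst u.
  assert (H1 : a * / A <= 1). { apply (Rmult_le_reg_r A); [lra|]. rewrite Rmult_assoc, Rinv_l by lra. lra. }
  assert (H2 : 1 <= a * / m). { apply (Rmult_le_reg_r m); [lra|]. rewrite Rmult_assoc, Rinv_l by lra. lra. }
  assert (H3 : 1 <= (a * / m) ^ 2) by nra.
  assert (E1: (2 * a * g) ^ 2 * (be / (2 * A)) = 2 * be * a * g ^ 2 * (a * / A)) by (field; lra).
  assert (E2: (2 * a * g) ^ 2 * (be ^ 2 / (2 * m ^ 2)) = 2 * be ^ 2 * g ^ 2 * (a * / m) ^ 2) by (field; lra).
  assert (0 <= g ^ 2) by apply pow2_ge_0.
  assert (0 <= (e + g) ^ 2) by apply pow2_ge_0.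
  assert (2 * be * a * g ^ 2 * (a * / A) <= 2 * be * a * g ^ 2).
  { assert (0 <= 2 * be * a * g ^ 2) by (apply Rmult_le_pos; [nra| auto]). nra. }
  assert (2 * be ^ 2 * g ^ 2 <= 2 * be ^ 2 * g ^ 2 * (a * / m) ^ 2).
  { assert (0 <= 2 * be ^ 2 * g ^ 2) by (apply Rmult_le_pos; [nra| auto]). nra. }
  nra. Qed.

Lemma dyn (S S' r bp X Y : R) : 0 < r -> 0 <= S -> 0 <= X -> 0 <= Y -> 0 <= bp <= 1 ->
  X * r ^ 2 + 4 * Y <= bp * r ^ 2 -> S' <= S * (1 - 2 * bp + X) + Y ->
  (r ^ 2 <= S -> S' <= (1 - bp) * S) /\ (S <= r ^ 2 -> S' <= r ^ 2).
Proof. intros Hr HS HX HY Hbp HK HS1. assert (Hr2 : 0 < r ^ 2) by (apply pow_lt; auto). split; intros H.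
  - assert ((bp - X) * (S - r ^ 2) >= 0) by nra. nra.
  - destruct (Rle_lt_dec 0 (1 - 2 * bp + X)).
    + assert (S * (1 - 2 * bp + X) <= r ^ 2 * (1 - 2 * bp + X)) by nra. nra.
    + nra.
Qed.

Lemma min_exists (P : nat -> Prop) : forall N n, (n <= N)%nat -> P n -> exists l, P l /\ forall k, (k < l)%nat -> ~ P k.
Proof. induction N; intros n Hn HP.
  - exists n. split; auto. intros; lia.
  - destruct (classic (exists k, (k < n)%nat /\ P k)) as [[k [Hk HPk]]|Hno].
    + apply (IHN k); auto; lia.
    + exists n. split; auto. intros k Hk HPk. apply Hno. eauto.
Qed.

Theorem theorem4p5
  (net : network) (a c : nat -> R)
  (Hedges : forall i j, In (i, j) (edges net) -> (i < nb net)%nat /\ (j < nb net)%nat)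
  (Hnodup : NoDup (edges net))
  (Hzbar : forall i j, In (i, j) (edges net) -> 0 < zbar net i j)
  (Hbus : forall n, (n < ng net)%nat -> (bus_of net n < nb net)%nat)
  (Hload : forall i, (i < nb net)%nat -> 0 <= load net i)
  (Ha : forall n, (n < ng net)%nat -> 0 < a n)
  (Hc : forall n, (n < ng net)%nat -> 0 <= c n)
  (xs : nat -> R) (zs : nat -> nat -> R)
  (Hopt : dcopf_opt net a c xs zs)
  (Huniq : forall x z, dcopf_opt net a c x z -> forall n, (n < ng net)%nat -> x n = xs n)
  (Hgens : forall i, (i < nb net)%nat -> ngen_at net i = 0%nat \/ (2 <= ngen_at net i)%nat)
  (Hxpos : forall n, (n < ng net)%nat -> 0 < xs n)
  (bs : nat -> R)
  (Hbs : forall n, (n < ng net)%nat -> bs n = 2 * a n * xs n + c n)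
  (beta : nat -> R) (b q xo : nat -> nat -> R) (zo : nat -> nat -> nat -> R)
  (Hexec : BAA_execution net a c beta b q xo zo)
  (Hbeta : forall k n, (1 <= k)%nat -> (n < ng net)%nat -> 0 < beta k < 2 * a n)
  (r : R) (Hr : 0 < r < bdist (ng net) (b 1%nat) bs)
  (alpha : R) (Halpha : 0 < alpha)
  (Hstep : forall k, (1 <= k)%nat -> alpha <= beta k <= Bstep net a r) :
  exists l : nat, (1 <= l)%nat /\
    bdist (ng net) (b l) bs < r /\
    (forall k, (1 <= k)%nat -> (k <= l - 1)%nat ->
       r <= bdist (ng net) (b k) bs /\
       bdist (ng net) (b (S k)) bs
         <= Rpower (1 - alpha / (2 * amax net a)) (INR k / 2)
            * bdist (ng net) (b 1%nat) bs) /\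
    (forall k, (l <= k)%nat ->
       bdist (ng net) (b k) bs <= sqrt (1 + Bstep net a r / (2 * amax net a)) * r).
Proof.
  destruct Hexec as [Hinit Hrec].
  pose proof (proj1 Hopt) as Fs.
  assert (Hng : (0 < ng net)%nat).
  { destruct (ng net) eqn:E; [|lia]. exfalso. unfold bdist in Hr. rewrite ?E, rsum_0, sqrt_0 in Hr. lra. }
  set (A := amax net a). set (m := amin net a).
  assert (HA0 : a 0%nat <= A) by (apply amax_ge; auto).
  assert (HA : 0 < A) by (specialize (Ha 0%nat Hng); lra).
  assert (Hm : 0 < m) by (apply amin_pos; auto).
  assert (Hinner : forall k, (1 <= k)%nat -> (forall n, (n < ng net)%nat -> c n <= b k n) ->
     forall n, (n < ng net)%nat -> 2 * a n * q k n = b k n - c n /\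
       b (S k) n = b k n + beta k * (xo k n - q k n) /\ c n <= b (S k) n).
  { intros k Hk Hge n Hn. destruct (Hrec k Hk) as [Hbr [[Fo _] Hup]].
    pose proof (best_resp _ _ _ _ (Ha n Hn) (Hge n Hn) (Hbr n Hn)) as Hq.
    assert (Hq0 : 0 <= q k n) by (apply (Hbr n Hn)).
    assert (Hxo : 0 <= xo k n) by (apply (proj2 (proj2 Fo)); auto).
    specialize (Hbeta k n Hk Hn). specialize (Hc n Hn). specialize (Hge n Hn).
    assert (Hin : c n <= b k n + beta k * (xo k n - q k n)).
    { assert (0 <= q k n * (2 * a n - beta k)) by (apply Rmult_le_pos; lra).
      assert (0 <= beta k * xo k n) by (apply Rmult_le_pos; lra). nra. }
    rewrite (Hup n Hn), Rmax_right by lra. split; [|split]; auto; lra. }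
  assert (Bge : forall k, (1 <= k)%nat -> forall n, (n < ng net)%nat -> c n <= b k n).
  { induction k; intros Hk; [lia|]. destruct k; [exact Hinit|].
    intros n Hn. exact (proj2 (proj2 (Hinner (S k) ltac:(lia) (IHk ltac:(lia)) n Hn))). }
  set (S := fun k => rsum (ng net) (fun n => (b k n - bs n) ^ 2)).
  set (Y := ybar net).
  assert (HS0 : forall k, 0 <= S k) by (intros; apply rsum_nonneg; intros; apply pow2_ge_0).
  assert (Step : forall k, (1 <= k)%nat ->
     S (Datatypes.S k) <= S k * (1 - 2 * (beta k / (2 * A)) + beta k ^ 2 / (2 * m ^ 2)) + 4 * beta k ^ 2 * Y ^ 2).
  { intros k Hk. destruct (Hrec k Hk) as [Hbr [[Fo Ho] Hup]].
    assert (Hbk : 0 < beta k) by (apply (Hbeta k 0%nat Hk Hng)).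
    set (C := 1 - 2 * (beta k / (2 * A)) + beta k ^ 2 / (2 * m ^ 2)).
    assert (E1 : S (Datatypes.S k) <= rsum (ng net) (fun n =>
        ((b k n - bs n) ^ 2 * C + 2 * beta k * ((b k n - bs n) * (xo k n - xs n))) + 2 * beta k ^ 2 * (xo k n - xs n) ^ 2)).
    { unfold S. apply rsum_le. intros n Hn.
      destruct (Hinner k Hk (Bge k Hk) n Hn) as [Hq [Hb _]].
      rewrite Hb. replace (b k n + beta k * (xo k n - q k n) - bs n) with
        ((b k n - bs n) + beta k * ((xo k n - xs n) - (q k n - xs n))) by ring.
      apply comp_ineq with (a := a n); auto. apply amin_le; auto. apply amax_ge; auto.
      rewrite (Hbs n Hn). lra. }
    rewrite !rsum_plus, !rsum_scal in E1.
    assert (E2 : rsum (ng net) (fun n => (b k n - bs n) * (xo k n - xs n)) <= 0).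
    { assert (G1 := Ho xs zs Fs).
      assert (G2 := first_order net a c xs zs (xo k) (zo k) Ha Hopt Fo).
      rewrite (rsum_ext _ (fun n => (2 * a n * xs n + c n) * xs n) (fun n => bs n * xs n)) in G2 by (intros; rewrite Hbs; auto).
      rewrite (rsum_ext _ (fun n => (2 * a n * xs n + c n) * xo k n) (fun n => bs n * xo k n)) in G2 by (intros; rewrite Hbs; auto).
      assert (rsum (ng net) (fun n => (b k n - bs n) * (xo k n - xs n)) =
        rsum (ng net) (fun n => b k n * xo k n) - rsum (ng net) (fun n => b k n * xs n)
        - (rsum (ng net) (fun n => bs n * xo k n) - rsum (ng net) (fun n => bs n * xs n))).
      { rewrite <- !rsum_minus. apply rsum_ext. intros; ring. }
      lra. }
    assert (E3 : rsum (ng net) (fun n => (xo k n - xs n) ^ 2) <= 2 * Y ^ 2).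
    { assert (Hso := sum_gen net (xo k) (zo k) Hedges Hbus Fo).
      assert (Hss := sum_gen net xs zs Hedges Hbus Fs).
      assert (Po : forall n, (n < ng net)%nat -> 0 <= xo k n) by (apply (proj2 (proj2 Fo))).
      assert (Ps : forall n, (n < ng net)%nat -> 0 <= xs n) by (apply (proj2 (proj2 Fs))).
      assert (L1 := rsum_sq_le _ _ Po). assert (L2 := rsum_sq_le _ _ Ps).
      assert (rsum (ng net) (fun n => (xo k n - xs n) ^ 2) <= rsum (ng net) (fun n => xo k n ^ 2 + xs n ^ 2)).
      { apply rsum_le. intros n Hn. specialize (Po n Hn); specialize (Ps n Hn). nra. }
      rewrite rsum_plus in H. fold Y in Hso, Hss. rewrite Hso in L1. rewrite Hss in L2. lra. }
    assert (Hsq : 0 <= beta k ^ 2) by apply pow2_ge_0.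
    fold (S k) in E1.
    replace (rsum (ng net) (fun i => (b k i - bs i) ^ 2 * C)) with (S k * C) in E1
      by (unfold S; rewrite Rmult_comm, <- rsum_scal; apply rsum_ext; intros; ring).
    nra. }
  set (rho := 1 - alpha / (2 * A)).
  assert (HK : forall k, (1 <= k)%nat -> 0 < beta k /\
     beta k ^ 2 / (2 * m ^ 2) * r ^ 2 + 4 * (4 * beta k ^ 2 * Y ^ 2) <= beta k / (2 * A) * r ^ 2).
  { intros k Hk. assert (Hbk : 0 < beta k) by (apply (Hbeta k 0%nat Hk Hng)). split; auto.
    destruct (Hstep k Hk) as [_ Hb]. unfold Bstep in Hb. fold A m Y in Hb.
    set (K := / (2 * m ^ 2) + 16 * Y ^ 2 / r ^ 2) in Hb.
    assert (HKp : 0 < K).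
    { unfold K. assert (0 < / (2 * m ^ 2)) by (apply Rinv_0_lt_compat; nra).
      assert (0 <= 16 * Y ^ 2 / r ^ 2). { apply Rmult_le_pos. nra. left; apply Rinv_0_lt_compat; nra. } lra. }
    assert (H1 : beta k * K <= / (2 * A)).
    { apply (Rmult_le_compat_r K) in Hb; [|lra]. rewrite Rmult_assoc, Rinv_l in Hb by lra. lra. }
    assert (E : beta k ^ 2 / (2 * m ^ 2) * r ^ 2 + 4 * (4 * beta k ^ 2 * Y ^ 2) = beta k * r ^ 2 * (beta k * K)).
    { unfold K. field. lra. }
    rewrite E. replace (beta k / (2 * A) * r ^ 2) with (beta k * r ^ 2 * / (2 * A)) by (field; lra).
    apply Rmult_le_compat_l; auto. assert (0 < r ^ 2) by (apply pow_lt; lra). nra. }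
  assert (Hrho : 0 < rho < 1).
  { destruct (Hstep 1%nat ltac:(lia)) as [H1 _]. specialize (Hbeta 1%nat 0%nat ltac:(lia) Hng).
    unfold rho. split.
    - assert (alpha / (2 * A) < 1). { apply (Rmult_lt_reg_r (2 * A)); [lra|]. unfold Rdiv. rewrite Rmult_assoc, Rinv_l by lra. lra. } lra.
    - assert (0 < alpha / (2 * A)) by (apply Rdiv_lt_0_compat; lra). lra. }
  assert (Dyn : forall k, (1 <= k)%nat -> (r ^ 2 <= S k -> S (Datatypes.S k) <= rho * S k) /\ (S k <= r ^ 2 -> S (Datatypes.S k) <= r ^ 2)).
  { intros k Hk. destruct (HK k Hk) as [Hbk HKk].
    assert (Hbp : 0 <= beta k / (2 * A) <= 1).
    { specialize (Hbeta k 0%nat Hk Hng). split. left; apply Rdiv_lt_0_compat; lra.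
      apply (Rmult_le_reg_r (2 * A)); [lra|]. unfold Rdiv. rewrite Rmult_assoc, Rinv_l by lra. lra. }
    assert (HX : 0 <= beta k ^ 2 / (2 * m ^ 2)). { apply Rmult_le_pos. nra. left; apply Rinv_0_lt_compat; nra. }
    destruct (dyn (S k) (S (Datatypes.S k)) r (beta k / (2 * A)) (beta k ^ 2 / (2 * m ^ 2)) (4 * beta k ^ 2 * Y ^ 2))
      as [D1 D2]; auto; try lra; try nra.
    split; auto. intros Hs. eapply Rle_trans. apply D1; auto.
    apply Rmult_le_compat_r; auto. unfold rho. destruct (Hstep k Hk) as [Hal _].
    assert (alpha / (2 * A) <= beta k / (2 * A)). { unfold Rdiv. apply Rmult_le_compat_r; [left; apply Rinv_0_lt_compat|]; lra. } lra. }
  assert (Geo : forall k, (forall j, (1 <= j)%nat -> (j <= k)%nat -> r ^ 2 <= S j) -> S (Datatypes.S k) <= rho ^ k * S 1%nat).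
  { induction k; intros H.
    - simpl. lra.
    - eapply Rle_trans. apply (proj1 (Dyn (Datatypes.S k) ltac:(lia))). apply H; lia.
      simpl. rewrite Rmult_assoc. apply Rmult_le_compat_l; [lra|]. apply IHk. intros; apply H; lia. }
  assert (Hr2 : 0 < r ^ 2) by (apply pow_lt; lra).
  assert (HS1 : r ^ 2 < S 1%nat).
  { destruct (Rlt_le_dec (r ^ 2) (S 1%nat)) as [|Hle]; auto. exfalso.
    apply sqrt_le_1_alt in Hle. rewrite sqrt_pow2 in Hle by lra. unfold bdist in Hr. fold (S 1%nat) in Hr. lra. }
  set (P := fun k => (1 <= k)%nat /\ S k < r ^ 2).
  assert (Ex : exists K, P K).
  { apply NNPP. intros Hno.
    assert (All : forall k, (1 <= k)%nat -> r ^ 2 <= S k).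
    { intros k Hk. destruct (Rlt_le_dec (S k) (r ^ 2)); auto. exfalso. apply Hno. exists k. split; auto. }
    assert (Hy : 0 < r ^ 2 / S 1%nat) by (apply Rdiv_lt_0_compat; lra).
    destruct (pow_lt_1_zero rho ltac:(rewrite Rabs_pos_eq; lra) _ Hy) as [N HN].
    specialize (HN N (le_n N)). rewrite Rabs_pos_eq in HN by (apply pow_le; lra).
    assert (G := Geo N (fun j Hj _ => All j Hj)).
    assert (rho ^ N * S 1%nat < r ^ 2).
    { apply (Rmult_lt_compat_r (S 1%nat)) in HN; [|lra]. unfold Rdiv in HN. rewrite Rmult_assoc, Rinv_l in HN by lra. lra. }
    specialize (All (Datatypes.S N) ltac:(lia)). lra. }
  destruct Ex as [K HPK].
  destruct (min_exists P K K (le_n K) HPK) as [l [[Hl1 Hl2] Hmin]].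
  assert (Before : forall k, (1 <= k)%nat -> (k < l)%nat -> r ^ 2 <= S k).
  { intros k Hk Hkl. destruct (Rlt_le_dec (S k) (r ^ 2)); auto. exfalso. apply (Hmin k Hkl). split; auto. }
  exists l. split; [auto|split; [|split]].
  - change (sqrt (S l) < r). rewrite <- (sqrt_pow2 r) by lra. apply sqrt_lt_1_alt. split; auto.
  - intros k Hk Hkl. split.
    + change (r <= sqrt (S k)). rewrite <- (sqrt_pow2 r) by lra. apply sqrt_le_1_alt. apply Before; lia.
    + change (sqrt (S (Datatypes.S k)) <= Rpower rho (INR k / 2) * sqrt (S 1%nat)).
      assert (G := Geo k (fun j Hj Hjk => Before j Hj ltac:(lia))).
      assert (Hpk : 0 < rho ^ k) by (apply pow_lt; lra).
      replace (Rpower rho (INR k / 2)) with (sqrt (rho ^ k)).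
      2:{ unfold Rdiv. rewrite <- Rpower_mult, Rpower_pow by lra. rewrite Rpower_sqrt; auto. }
      rewrite <- sqrt_mult_alt by lra. apply sqrt_le_1_alt. exact G.
  - assert (Inv : forall j, (l <= j)%nat -> S j <= r ^ 2).
    { induction j; intros Hj.
      - lia.
      - destruct (Nat.eq_dec l (Datatypes.S j)) as [<-|Hne]; [lra|].
        apply (proj2 (Dyn j ltac:(lia))). apply IHj. lia. }
    intros k Hk. change (sqrt (S k) <= sqrt (1 + Bstep net a r / (2 * A)) * r).
    assert (HB : 0 <= Bstep net a r / (2 * A)).
    { destruct (Hstep 1%nat ltac:(lia)) as [H1 H2]. apply Rmult_le_pos; [lra| left; apply Rinv_0_lt_compat; lra]. }
    assert (1 <= sqrt (1 + Bstep net a r / (2 * A))). { pose proof (sqrt_le_1_alt 1 (1 + Bstep net a r / (2 * A)) ltac:(lra)) as Hq1. rewrite sqrt_1 in Hq1. exact Hq1. }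
    assert (sqrt (S k) <= r). { rewrite <- (sqrt_pow2 r) by lra. apply sqrt_le_1_alt. apply Inv; auto. }
    nra.
Qed.
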